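(* Let $A\subset\mathbb{N}$. Suppose there exist a Følner sequence $\Phi$ in $\mathbb{N}$, a set $L\subset\mathbb{N}$ and $\epsilon>0$ such that $\mathsf{d}_\Phi\big((A-m)\cap L\big)$ exists for every $m\in\mathbb{N}$, and such that for every finite subset $F\subset L$ the set $$\bigcap_{\ell\in F}(A-\ell)\ \cap\ \Big\{m\in\mathbb{N}:\mathsf{d}_\Phi\big((A-m)\cap L\big)>\epsilon\Big\}$$ is infinite. Then there exist infinite sets $B,C\subset\mathbb{N}$ such that $B+C\subset A$.
   Context: A Følner sequence in $\mathbb{N}$ is a sequence $\Phi\colon N\mapsto\Phi_N$ of finite non-empty subsets of $\mathbb{N}$ with $|(\Phi_N+m)\triangle\Phi_N|/|\Phi_N|\to0$ for all $m\in\mathbb{N}$. For $E\subset\mathbb{N}$, $\mathsf{d}_\Phi(E)=\lim_{N\to\infty}|E\cap\Phi_N|/|\Phi_N|$ when the limit exists. For $m\in\mathbb{N}$, $A-m=\{n\in\mathbb{N}:n+m\in A\}$. *)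

(* Defs.v *)
(* Convention: N = {1,2,3,...}; subsets of N are predicates
   on nat contained in [PosN]. *)
From Stdlib Require Import Reals List Arith ClassicalEpsilon.
Open Scope R_scope.

Definition PosN (n : nat) : Prop := (0 < n)%nat.

Definition card_in (E : nat -> Prop) (l : list nat) : nat :=
  length (filter (fun x => if excluded_middle_informative (E x) then true else false) l).

(* |(Phi + m) \triangle Phi| for a duplicate-free list Phi *)
Definition symdiff_shift (Phi : list nat) (m : nat) : nat :=
  (card_in (fun x => ~ In (x + m)%nat Phi) Phi
   + card_in (fun y => ~ exists x, In x Phi /\ (x + m)%nat = y) Phi)%nat.

(* Folner sequence in N: finite non-empty subsets of N (encoded as
   duplicate-free nonempty lists of positive integers) *)
Definition Folner (Phi : nat -> list nat) : Prop :=
  (forall N, NoDup (Phi N) /\ Phi N <> nil /\ (forall x, In x (Phi N) -> PosN x)) /\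
  (forall m, PosN m ->
     Un_cv (fun N => INR (symdiff_shift (Phi N) m) / INR (length (Phi N))) 0).

Definition density_is (Phi : nat -> list nat) (E : nat -> Prop) (d : R) : Prop :=
  Un_cv (fun N => INR (card_in E (Phi N)) / INR (length (Phi N))) d.

Definition shiftset (A : nat -> Prop) (m : nat) : nat -> Prop :=
  fun n => PosN n /\ A (n + m)%nat.

Definition infinite_set (S : nat -> Prop) : Prop :=
  forall k, exists n, (k < n)%nat /\ S n.

(* Main.v *)
Require Import Defs.
From Stdlib Require Import Reals List Arith.
Open Scope R_scope.
From Stdlib Require Import Lia Lra Classical ClassicalEpsilon FunctionalExtensionality.
From mathcomp Require filter.
Module UF.
Import mathcomp.classical.filter.
Lemma ultra_exists : exists U : (nat -> Prop) -> Prop,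
  (forall X Y, U X -> U Y -> U (fun n => X n /\ Y n)) /\
  (forall X Y : nat -> Prop, (forall n, X n -> Y n) -> U X -> U Y) /\
  (~ U (fun _ => False)) /\
  (forall X, U X \/ U (fun n => ~ X n)) /\
  (forall k, U (fun n => (k <= n)%nat)).
Proof.
set (F := fun P : nat -> Prop => exists k, forall n, (k <= n)%nat -> P n).
assert (FF : ProperFilter F).
{ constructor.
  { intros [k Hk]. exact (Hk k (le_n k)). }
  constructor.
    { exists 0%nat. intros; exact I. }
    { intros P Q [k1 H1] [k2 H2]. exists (k1 + k2)%nat. intros n Hn.
      split; [apply H1 | apply H2]; lia. }
    { intros P Q HPQ [k H]. exists k. intros n Hn. apply HPQ, H, Hn. } }
destruct (ultraFilterLemma FF) as [G [UG FG]].
exists G. pose proof (@ultra_proper _ _ UG) as PG.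
split; [|split; [|split; [|split]]].
{ intros X Y HX HY. exact (filterI HX HY). }
{ intros X Y HXY HX. exact (filterS HXY HX). }
{ apply PG. }
{ intros X. exact (in_ultra_setVsetC X UG). }
{ intros k. apply FG. exists k. intros n Hn; exact Hn. }
Qed.
End UF.
Close Scope R_scope.

Lemma card_in_nil X : card_in X nil = 0%nat.
Proof. reflexivity. Qed.

Lemma card_in_cons X a l :
  card_in X (a :: l) = ((if excluded_middle_informative (X a) then 1 else 0) + card_in X l)%nat.
Proof. unfold card_in. simpl. destruct (excluded_middle_informative (X a)); reflexivity. Qed.

Lemma card_in_le_length X l : (card_in X l <= length l)%nat.
Proof.
  induction l as [|a l IH]; [unfold card_in; simpl; lia|].
  rewrite card_in_cons. simpl. destruct (excluded_middle_informative (X a)); lia.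
Qed.

Lemma card_in_mono X Y l : (forall x, In x l -> X x -> Y x) -> (card_in X l <= card_in Y l)%nat.
Proof.
  induction l as [|a l IH]; intros H; [unfold card_in; simpl; lia|].
  rewrite !card_in_cons.
  assert (IH' := IH (fun x Hx => H x (or_intror Hx))).
  destruct (excluded_middle_informative (X a)) as [Xa|Xa];
  destruct (excluded_middle_informative (Y a)) as [Ya|Ya]; try lia.
  exfalso. apply Ya, H; [left; reflexivity|exact Xa].
Qed.

Lemma card_in_modular X Y l :
  (card_in (fun n => X n \/ Y n) l + card_in (fun n => X n /\ Y n) l =
   card_in X l + card_in Y l)%nat.
Proof.
  induction l as [|a l IH]; [reflexivity|].
  rewrite !card_in_cons.
  destruct (excluded_middle_informative (X a)) as [Xa|Xa];
  destruct (excluded_middle_informative (Y a)) as [Ya|Ya];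
  destruct (excluded_middle_informative (X a \/ Y a)) as [XYa|XYa];
  destruct (excluded_middle_informative (X a /\ Y a)) as [XYa'|XYa']; try tauto; lia.
Qed.

Lemma card_in_pos X l x : In x l -> X x -> (1 <= card_in X l)%nat.
Proof.
  induction l as [|a l IH]; intros Hin HX; [destruct Hin|].
  rewrite card_in_cons. destruct Hin as [Hax|Hin]; [subst a|].
  - destruct (excluded_middle_informative (X x)); [lia|tauto].
  - specialize (IH Hin HX). lia.
Qed.

Lemma card_in_bounded X l k : NoDup l -> (forall x, X x -> (x <= k)%nat) ->
  (card_in X l <= S k)%nat.
Proof.
  intros Hnd Hb. unfold card_in.
  replace (S k) with (length (seq 0 (S k))) by apply length_seq.
  apply NoDup_incl_length; [apply NoDup_filter, Hnd|].
  intros x Hx. apply filter_In in Hx. destruct Hx as [_ Hx].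
  destruct (excluded_middle_informative (X x)) as [HX|]; [|discriminate].
  apply in_seq. specialize (Hb x HX). lia.
Qed.

Lemma symdiff_ge1 l : l <> nil -> (1 <= symdiff_shift l 1)%nat.
Proof.
  intros Hl. unfold symdiff_shift.
  assert (exists x, In x l /\ ~ In (x + 1)%nat l) as [x [Hx Hx1]].
  { destruct (classic (exists x, In x l /\ (list_max l <= x)%nat)) as [[x [Hx Hm]]|Hn].
    - exists x. split; [exact Hx|]. intros Hin.
      assert (list_max l <= list_max l)%nat as Hle by lia.
      apply list_max_le in Hle. rewrite Forall_forall in Hle.
      specialize (Hle _ Hin). lia.
    - exfalso. assert (list_max l < list_max l)%nat; [|lia].
      apply (list_max_lt (list_max l) Hl). apply Forall_forall.
      intros y Hy. destruct (Nat.lt_ge_cases y (list_max l)); [assumption|].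
      exfalso; apply Hn; exists y; auto. }
  pose proof (card_in_pos (fun x => ~ In (x + 1)%nat l) l x Hx Hx1). lia.
Qed.
Open Scope R_scope.

Section Ulim.
Variable U : (nat -> Prop) -> Prop.
Hypothesis UI : forall X Y, U X -> U Y -> U (fun n => X n /\ Y n).
Hypothesis US : forall X Y : nat -> Prop, (forall n, X n -> Y n) -> U X -> U Y.
Hypothesis U0 : ~ U (fun _ => False).
Hypothesis UC : forall X, U X \/ U (fun n => ~ X n).
Hypothesis UK : forall k, U (fun n => (k <= n)%nat).

Definition ulim (s : nat -> R) (r : R) :=
  forall eta, eta > 0 -> U (fun N => Rabs (s N - r) < eta).

Lemma U_ex X : U X -> exists N, X N.
Proof.
  intros HX. destruct (classic (exists N, X N)) as [H|H]; [exact H|].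
  exfalso. apply U0. apply (US X); [|exact HX]. intros n Hn. apply H. exists n; exact Hn.
Qed.

Lemma UT : U (fun _ => True).
Proof. apply (US _ _ (fun n _ => I) (UK 0)). Qed.

Lemma ulim_ex s : (forall N, 0 <= s N <= 1) -> exists r, ulim s r.
Proof.
  intros Hs.
  set (S := fun t => U (fun N => t <= s N)).
  assert (Hb : bound S).
  { exists 1. intros t Ht. destruct (Rle_lt_dec t 1) as [H|H]; [exact H|].
    exfalso. apply U0. apply (US (fun N => t <= s N)); [|exact Ht].
    intros N HN; specialize (Hs N); lra. }
  assert (He : exists x, S x).
  { exists 0. apply (US (fun _ => True)); [|exact UT]. intros N _; apply (Hs N). }
  destruct (completeness S Hb He) as [r [Hub Hl]].
  exists r. intros eta Heta.
  assert (H1 : exists t, S t /\ r - eta < t).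
  { destruct (classic (exists t, S t /\ r - eta < t)) as [H|H]; [exact H|].
    exfalso. assert (r <= r - eta); [|lra]. apply Hl. intros t Ht.
    destruct (Rle_lt_dec t (r - eta)); [assumption|]. exfalso; apply H; exists t; auto. }
  destruct H1 as [t [Ht Hrt]].
  assert (H2 : U (fun N => s N < r + eta)).
  { destruct (UC (fun N => s N < r + eta)) as [H|H]; [exact H|].
    exfalso. assert (S (r + eta)) as HS.
    { apply (US _ _ (fun N HN => Rnot_lt_le _ _ HN) H). }
    specialize (Hub _ HS). lra. }
  refine (US _ _ _ (UI _ _ Ht H2)). intros N [HN1 HN2]. apply Rabs_def1; lra.
Qed.

Lemma ulim_unique s r q : ulim s r -> ulim s q -> r = q.
Proof.
  intros Hr Hq. destruct (Req_dec r q) as [|Hne]; [assumption|].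
  exfalso. set (eta := Rabs (r - q) / 2).
  assert (Heta : eta > 0).
  { unfold eta. assert (r - q <> 0) as Hd by lra. apply Rabs_pos_lt in Hd. lra. }
  destruct (U_ex _ (UI _ _ (Hr eta Heta) (Hq eta Heta))) as [N [H1 H2]].
  apply Rabs_def2 in H1. apply Rabs_def2 in H2.
  unfold eta in *. destruct (Rle_lt_dec r q).
  - rewrite Rabs_left1 in *; lra.
  - rewrite Rabs_right in *; lra.
Qed.

Lemma ulim_le s t r q : (forall N, s N <= t N) -> ulim s r -> ulim t q -> r <= q.
Proof.
  intros Hst Hr Hq. destruct (Rle_lt_dec r q) as [|Hlt]; [assumption|].
  exfalso. set (eta := (r - q) / 2).
  assert (Heta : eta > 0) by (unfold eta; lra).
  destruct (U_ex _ (UI _ _ (Hr eta Heta) (Hq eta Heta))) as [N [H1 H2]].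
  apply Rabs_def2 in H1. apply Rabs_def2 in H2. specialize (Hst N). unfold eta in *. lra.
Qed.

Lemma ulim_add s t r q : ulim s r -> ulim t q -> ulim (fun N => s N + t N) (r + q).
Proof.
  intros Hr Hq eta Heta.
  assert (He2 : eta / 2 > 0) by lra.
  refine (US _ _ _ (UI _ _ (Hr (eta/2) He2) (Hq (eta/2) He2))).
  intros N [H1 H2].
  apply Rabs_def2 in H1; apply Rabs_def2 in H2; apply Rabs_def1; lra.
Qed.

Lemma ulim_cv s d : Un_cv s d -> ulim s d.
Proof.
  intros H eta Heta. destruct (H eta Heta) as [N0 HN0].
  refine (US _ _ _ (UK N0)). intros N HN. apply (HN0 N); lia.
Qed.

End Ulim.

Lemma card_in_ext X Y l : (forall x, X x <-> Y x) -> card_in X l = card_in Y l.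
Proof.
  intros H. apply Nat.le_antisymm; apply card_in_mono; intros x _; apply H.
Qed.

Lemma card_in_false l : card_in (fun _ => False) l = 0%nat.
Proof.
  induction l as [|a l IH]; [reflexivity|]. rewrite card_in_cons, IH.
  destruct (excluded_middle_informative False); [contradiction|reflexivity].
Qed.

Lemma div_nonneg a b : 0 <= a -> 0 < b -> 0 <= a / b.
Proof. intros. unfold Rdiv. apply Rmult_le_pos; [assumption|left; apply Rinv_0_lt_compat; assumption]. Qed.

Section Mu.
Variable U : (nat -> Prop) -> Prop.
Hypothesis UI : forall X Y, U X -> U Y -> U (fun n => X n /\ Y n).
Hypothesis US : forall X Y : nat -> Prop, (forall n, X n -> Y n) -> U X -> U Y.
Hypothesis U0 : ~ U (fun _ => False).
Hypothesis UC : forall X, U X \/ U (fun n => ~ X n).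
Hypothesis UK : forall k, U (fun n => (k <= n)%nat).
Variable Phi : nat -> list nat.
Hypothesis HPhi : Folner Phi.

Definition dd N X := INR (card_in X (Phi N)) / INR (length (Phi N)).

Lemma len_pos N : (0 < length (Phi N))%nat.
Proof.
  destruct HPhi as [H _]. destruct (H N) as [_ [Hne _]].
  destruct (Phi N); [contradiction|simpl; lia].
Qed.

Lemma dd_bounds N X : 0 <= dd N X <= 1.
Proof.
  unfold dd. pose proof (len_pos N) as Hl. pose proof (card_in_le_length X (Phi N)) as Hc.
  apply lt_INR in Hl. apply le_INR in Hc. simpl in Hl.
  pose proof (pos_INR (card_in X (Phi N))).
  split.
  - apply div_nonneg; lra.
  - apply (Rmult_le_reg_r (INR (length (Phi N)))); [lra|].
    unfold Rdiv. rewrite Rmult_assoc, Rinv_l; lra.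
Qed.

Definition mu X := proj1_sig (constructive_indefinite_description _
   (ulim_ex U UI US U0 UC UK (fun N => dd N X) (fun N => dd_bounds N X))).

Lemma mu_spec X : ulim U (fun N => dd N X) (mu X).
Proof. unfold mu. destruct constructive_indefinite_description as [r Hr]. exact Hr. Qed.

Lemma mu_mono X Y : (forall n, X n -> Y n) -> mu X <= mu Y.
Proof.
  intros H. apply (ulim_le U UI US U0 (fun N => dd N X) (fun N => dd N Y)); try apply mu_spec.
  intros N. unfold dd. apply Rmult_le_compat_r.
  - left. apply Rinv_0_lt_compat. pose proof (lt_INR _ _ (len_pos N)) as Hl. simpl in Hl. exact Hl.
  - apply le_INR, card_in_mono. intros x _; apply H.
Qed.

Lemma mu_ext X Y : (forall n, X n <-> Y n) -> mu X = mu Y.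
Proof. intros H. apply Rle_antisym; apply mu_mono; intros n; apply H. Qed.

Lemma mu_nonneg X : 0 <= mu X.
Proof.
  apply (ulim_le U UI US U0 (fun _ => 0) (fun N => dd N X)); [intros N; apply dd_bounds| |apply mu_spec].
  intros eta Heta. refine (US _ _ _ (UK 0)). intros n _. rewrite Rminus_0_r, Rabs_R0. exact Heta.
Qed.

Lemma mu_false : mu (fun _ => False) = 0.
Proof.
  apply (ulim_unique U UI US U0 (fun N => dd N (fun _ => False))); [apply mu_spec|].
  intros eta Heta. refine (US _ _ _ (UK 0)). intros n _. unfold dd. rewrite card_in_false.
  simpl. unfold Rdiv. rewrite Rmult_0_l, Rminus_0_r, Rabs_R0. exact Heta.
Qed.

Lemma mu_empty X : (forall n, ~ X n) -> mu X = 0.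
Proof. intros H. rewrite <- mu_false. apply mu_ext. intros n; split; [apply H|tauto]. Qed.

Lemma mu_modular X Y :
  mu (fun n => X n \/ Y n) + mu (fun n => X n /\ Y n) = mu X + mu Y.
Proof.
  apply (ulim_unique U UI US U0 (fun N => dd N (fun n => X n \/ Y n) + dd N (fun n => X n /\ Y n))).
  - apply ulim_add; auto; apply mu_spec.
  - replace (fun N => dd N (fun n => X n \/ Y n) + dd N (fun n => X n /\ Y n))
      with (fun N => dd N X + dd N Y).
    + apply ulim_add; auto; apply mu_spec.
    + apply functional_extensionality. intros N.
      unfold dd. rewrite <- !Rdiv_plus_distr, <- !plus_INR, card_in_modular. reflexivity.
Qed.

Lemma mu_subadd X Y : mu (fun n => X n \/ Y n) <= mu X + mu Y.
Proof. rewrite <- mu_modular. pose proof (mu_nonneg (fun n => X n /\ Y n)). lra. Qed.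

Lemma mu_diff X Y : (forall n, Y n -> X n) -> mu (fun n => X n /\ ~ Y n) = mu X - mu Y.
Proof.
  intros H. pose proof (mu_modular (fun n => X n /\ ~ Y n) Y) as E.
  rewrite (mu_ext _ X) in E by (intros n; split; [intros [[? ?]|Yn]; auto|]; intros Xn; destruct (classic (Y n)); tauto).
  rewrite (mu_empty (fun n => (X n /\ ~ Y n) /\ Y n)) in E by tauto. lra.
Qed.

Lemma mu_density X d : density_is Phi X d -> mu X = d.
Proof.
  intros H. apply (ulim_unique U UI US U0 (fun N => dd N X)); [apply mu_spec|].
  apply ulim_cv; auto.
Qed.

Lemma mu_pos_unbounded X : mu X > 0 -> forall k, exists n, (k < n)%nat /\ X n.
Proof.
  intros Hpos k. destruct (classic (exists n, (k < n)%nat /\ X n)) as [H|H]; [exact H|].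
  exfalso. assert (Hb : forall n, X n -> (n <= k)%nat).
  { intros n Xn. destruct (Nat.le_gt_cases n k); [assumption|]. exfalso; apply H; exists n; auto. }
  assert (Hcv : Un_cv (fun N => dd N X) 0).
  { intros eps Heps. destruct HPhi as [H1 H2].
    assert (Hk : 0 < INR (S k)) by (apply lt_0_INR; lia).
    destruct (H2 1%nat ltac:(unfold PosN; lia) (eps / INR (S k)) ltac:(apply Rdiv_lt_0_compat; lra)) as [N0 HN0].
    exists N0. intros N HN. specialize (HN0 N HN). unfold R_dist in *.
    rewrite Rminus_0_r in *. destruct (H1 N) as [Hnd [Hne _]].
    pose proof (dd_bounds N X) as [Hd0 _]. rewrite Rabs_right by lra.
    pose proof (symdiff_ge1 (Phi N) Hne) as Hs. apply le_INR in Hs.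
    pose proof (card_in_bounded X (Phi N) k Hnd Hb) as Hc. apply le_INR in Hc.
    pose proof (len_pos N) as Hl. apply lt_INR in Hl. simpl in Hl, Hs.
    set (sy := INR (symdiff_shift (Phi N) 1)) in *.
    set (l := INR (length (Phi N))) in *.
    set (c := INR (card_in X (Phi N))) in *.
    assert (Hsl : 0 <= sy / l) by (apply div_nonneg; lra).
    rewrite Rabs_right in HN0 by lra.
    assert (c / l <= INR (S k) * (sy / l)).
    { unfold Rdiv. rewrite <- Rmult_assoc. apply Rmult_le_compat_r.
      - left; apply Rinv_0_lt_compat; lra.
      - nra. }
    unfold dd. fold c l.
    assert (INR (S k) * (sy / l) < INR (S k) * (eps / INR (S k))).
    { apply Rmult_lt_compat_l; lra. }
    replace (INR (S k) * (eps / INR (S k))) with eps in * by (field; lra). lra. }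
  pose proof (ulim_unique U UI US U0 _ _ _ (mu_spec X) (ulim_cv U US UK _ _ Hcv)). lra.
Qed.


Lemma mu_le1 X : mu X <= 1.
Proof.
  apply (ulim_le U UI US U0 (fun N => dd N X) (fun _ => 1)); [intros N; apply dd_bounds|apply mu_spec|].
  intros eta Heta. refine (US _ _ _ (UK 0)). intros n _. rewrite Rminus_diag, Rabs_R0. exact Heta.
Qed.

Lemma mono_cauchy (a : nat -> R) d : d > 0 ->
  (forall M M', (M <= M')%nat -> a M <= a M') -> (forall M, 0 <= a M <= 1) ->
  exists M0, forall M, (M0 <= M)%nat -> a M <= a M0 + d.
Proof.
  intros Hd Hmono Hb.
  destruct (classic (exists M0, forall M, (M0 <= M)%nat -> a M <= a M0 + d)) as [H|H]; [exact H|].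
  exfalso.
  assert (Hs : forall M0, exists M, (M0 <= M)%nat /\ a M > a M0 + d).
  { intros M0. destruct (classic (exists M, (M0 <= M)%nat /\ a M > a M0 + d)) as [H'|H']; [exact H'|].
    exfalso. apply H. exists M0. intros M HM.
    destruct (Rle_lt_dec (a M) (a M0 + d)) as [|Hlt]; [assumption|].
    exfalso; apply H'; exists M; split; [assumption|lra]. }
  assert (Hj : forall j, exists M, a M > a 0%nat + INR j * d).
  { induction j as [|j [M HM]].
    - destruct (Hs 0%nat) as [M [_ HM]]. exists M. simpl. lra.
    - destruct (Hs M) as [M' [_ HM']]. exists M'. rewrite S_INR. lra. }
  destruct (INR_archimed d 1 Hd) as [j Hjd].
  destruct (Hj j) as [M HM]. pose proof (Hb M). pose proof (Hb 0%nat). lra.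
Qed.

Variable A : nat -> Prop.
Variable L : nat -> Prop.
Variable eps : R.
Hypothesis HLpos : forall n, L n -> PosN n.

Definition E m n := shiftset A m n /\ L n.
Definition heavy m := PosN m /\ exists d, density_is Phi (E m) d /\ d > eps.
Definition HK K m := heavy m /\ forall l, (l <= K)%nat -> L l -> A (m + l)%nat.
Hypothesis Hinf : forall K k, exists m, (k < m)%nat /\ HK K m.
Definition UU K M n := exists m, (K < m <= M)%nat /\ HK K m /\ E m n.
Definition pos (W : nat -> Prop) := exists d, d > 0 /\
  forall K, exists M, mu (fun n => W n /\ UU K M n) >= d.

Lemma HK_mono K K' m : (K <= K')%nat -> HK K' m -> HK K m.
Proof. intros HKK [Hh Ha]. split; [exact Hh|]. intros l Hl. apply Ha. lia. Qed.

Lemma UU_monoK K K' M n : (K <= K')%nat -> UU K' M n -> UU K M n.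
Proof.
  intros HKK [m [Hm [Hh He]]]. exists m. split; [lia|]. split; [|exact He].
  apply (HK_mono K K'); assumption.
Qed.

Lemma UU_monoM K M M' n : (M <= M')%nat -> UU K M n -> UU K M' n.
Proof. intros HMM [m [Hm HH]]. exists m. split; [lia|exact HH]. Qed.

Lemma pos_mono W W' : (forall n, W n -> W' n) -> pos W -> pos W'.
Proof.
  intros H [d [Hd HW]]. exists d. split; [exact Hd|]. intros K. destruct (HW K) as [M HM].
  exists M. apply Rle_ge. apply Rge_le in HM. eapply Rle_trans; [exact HM|].
  apply mu_mono. intros n [Wn Un]. auto.
Qed.

Lemma mu_heavy m : heavy m -> mu (E m) > eps.
Proof. intros [_ [d [Hd Hde]]]. rewrite (mu_density _ d Hd). exact Hde. Qed.

Definition Wc (cs : list nat) n := L n /\ PosN n /\ forall c, In c cs -> A (n + c)%nat.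

Hypothesis Heps : eps > 0.

Lemma claim0 : pos (Wc nil).
Proof.
  exists eps. split; [exact Heps|]. intros K.
  destruct (Hinf K K) as [m [Hm HKm]]. exists m.
  pose proof (mu_heavy m (proj1 HKm)) as Hmu.
  apply Rle_ge. left. eapply Rlt_le_trans; [exact Hmu|].
  apply mu_mono. intros n Hn. split.
  - destruct Hn as [[Pn _] Ln]. split; [exact Ln|]. split; [exact Pn|]. intros c [].
  - exists m. split; [lia|]. split; assumption.
Qed.

Lemma claim1 W : pos W -> forall k, exists n, (k < n)%nat /\ W n.
Proof.
  intros [d [Hd HW]] k. destruct (HW 0%nat) as [M HM].
  assert (Hp : mu W > 0).
  { apply Rge_le in HM. eapply Rlt_le_trans; [exact Hd|]. eapply Rle_trans; [exact HM|].
    apply mu_mono. intros n [Wn _]; exact Wn. }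
  exact (mu_pos_unbounded W Hp k).
Qed.

Lemma not_pos W : ~ pos W -> forall d, d > 0 -> exists K, forall M, mu (fun n => W n /\ UU K M n) < d.
Proof.
  intros Hn d Hd. destruct (classic (exists K, forall M, mu (fun n => W n /\ UU K M n) < d)) as [H|H]; [exact H|].
  exfalso. apply Hn. exists d. split; [exact Hd|]. intros K.
  destruct (classic (exists M, mu (fun n => W n /\ UU K M n) >= d)) as [H'|H']; [exact H'|].
  exfalso. apply H. exists K. intros M. destruct (Rlt_le_dec (mu (fun n => W n /\ UU K M n)) d) as [|Hge]; [assumption|].
  exfalso. apply H'. exists M. lra.
Qed.

Lemma claim2 W : pos W -> forall K0 k, exists m, (k < m)%nat /\ HK K0 m /\ pos (fun n => W n /\ E m n).
Proof.
  intros HW K0 k.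
  destruct (classic (exists m, (k < m)%nat /\ HK K0 m /\ pos (fun n => W n /\ E m n))) as [H|Hneg]; [exact H|].
  exfalso.
  assert (Hneg' : forall m, (k < m)%nat -> HK K0 m -> ~ pos (fun n => W n /\ E m n)).
  { intros m Hkm Hm Hp. apply Hneg. exists m. auto. }
  clear Hneg.
  set (K1 := (K0 + k)%nat).
  assert (HV : forall j eta, eta > 0 -> exists K, (K1 <= K)%nat /\
            forall M, mu (fun n => (W n /\ UU K1 j n) /\ UU K M n) < eta).
  { induction j as [|j IH]; intros eta Heta.
    - exists K1. split; [lia|]. intros M. rewrite mu_empty; [exact Heta|].
      intros n [[_ [m [Hm _]]] _]. lia.
    - destruct (classic ((K1 < S j)%nat /\ HK K1 (S j))) as [[Hlt HKj]|Hno].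
      + assert (Hnp : ~ pos (fun n => W n /\ E (S j) n)).
        { apply Hneg'; [unfold K1 in Hlt; lia|]. apply (HK_mono K0 K1); [unfold K1; lia|exact HKj]. }
        destruct (not_pos _ Hnp (eta/2) ltac:(lra)) as [Kb HKb].
        destruct (IH (eta/2) ltac:(lra)) as [Ka [HKa1 HKa]].
        exists (Ka + Kb)%nat. split; [lia|]. intros M.
        eapply Rle_lt_trans.
        { apply (mu_mono _ (fun n => ((W n /\ UU K1 j n) /\ UU Ka M n) \/ ((W n /\ E (S j) n) /\ UU Kb M n))).
          intros n [[Wn [m [Hm [HKm Em]]]] HU].
          assert (HUa : UU Ka M n) by (apply (UU_monoK Ka (Ka + Kb)); [lia|exact HU]).
          assert (HUb : UU Kb M n) by (apply (UU_monoK Kb (Ka + Kb)); [lia|exact HU]).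
          destruct (Nat.eq_dec m (S j)) as [->|Hne].
          - right. auto.
          - left. split; [|exact HUa]. split; [exact Wn|]. exists m. split; [lia|]. auto. }
        eapply Rle_lt_trans; [apply mu_subadd|].
        specialize (HKa M). specialize (HKb M). lra.
      + destruct (IH eta Heta) as [K [HK1 HK]]. exists K. split; [exact HK1|]. intros M.
        eapply Rle_lt_trans; [|exact (HK M)]. apply mu_mono.
        intros n [[Wn [m [Hm [HKm Em]]]] HU]. split; [|exact HU]. split; [exact Wn|].
        exists m. split; [|auto]. destruct (Nat.eq_dec m (S j)) as [->|Hne]; [|lia].
        exfalso. apply Hno. split; [lia|exact HKm]. }
  destruct HW as [d [Hd HW]].
  set (a := fun M => mu (fun n => W n /\ UU K1 M n)).
  destruct (mono_cauchy a (d/2) ltac:(lra)) as [M0 HM0].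
  { intros M M' HMM. unfold a. apply mu_mono. intros n [Wn Un]. split; [exact Wn|].
    apply (UU_monoM _ M); assumption. }
  { intros M. unfold a. split; [apply mu_nonneg|].
    apply mu_le1. }
  destruct (HV M0 (d/2) ltac:(lra)) as [K2 [HK2 HVK]].
  destruct (HW K2) as [M HM].
  set (M' := Nat.max M M0).
  assert (HM' : mu (fun n => W n /\ UU K2 M' n) >= d).
  { apply Rle_ge. apply Rge_le in HM. eapply Rle_trans; [exact HM|]. apply mu_mono.
    intros n [Wn Un]. split; [exact Wn|]. apply (UU_monoM _ M); [unfold M'; lia|exact Un]. }
  assert (Hdiff := mu_diff (fun n => W n /\ UU K1 M' n) (fun n => W n /\ UU K1 M0 n)).
  assert (Hsub : forall n, (W n /\ UU K1 M0 n) -> (W n /\ UU K1 M' n)).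
  { intros n [Wn Un]. split; [exact Wn|]. apply (UU_monoM _ M0); [unfold M'; lia|exact Un]. }
  specialize (Hdiff Hsub).
  assert (Hle : mu (fun n => W n /\ UU K2 M' n) <=
     mu (fun n => ((W n /\ UU K1 M0 n) /\ UU K2 M' n) \/ ((W n /\ UU K1 M' n) /\ ~ (W n /\ UU K1 M0 n)))).
  { apply mu_mono. intros n [Wn Un].
    assert (Un1 : UU K1 M' n) by (apply (UU_monoK _ K2); assumption).
    destruct (classic (W n /\ UU K1 M0 n)) as [Hin|Hout]; [left; auto|right; auto]. }
  pose proof (mu_subadd (fun n => (W n /\ UU K1 M0 n) /\ UU K2 M' n)
               (fun n => (W n /\ UU K1 M' n) /\ ~ (W n /\ UU K1 M0 n))) as Hsa.
  specialize (HVK M'). specialize (HM0 M' ltac:(unfold M'; lia)). unfold a in HM0.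
  lra.
Qed.

Definition Inv (s : list nat * list nat) :=
  (forall b, In b (fst s) -> L b /\ PosN b) /\ (forall c, In c (snd s) -> PosN c) /\
  (forall b c, In b (fst s) -> In c (snd s) -> A (b + c)%nat) /\ pos (Wc (snd s)).

Definition Pstep (s s' : list nat * list nat) k :=
  Inv s' /\ incl (fst s) (fst s') /\ incl (snd s) (snd s') /\
  (exists b, In b (fst s') /\ (k < b)%nat) /\ (exists c, In c (snd s') /\ (k < c)%nat).

Lemma inv0 : Inv (nil, nil).
Proof.
  split; [intros b []|]. split; [intros c []|]. split; [intros b c []|]. exact claim0.
Qed.

Lemma step s k : Inv s -> exists s', Pstep s s' k.
Proof.
  destruct s as [bs cs]. intros [Hb [Hc [Hbc Hp]]]. simpl in *.
  destruct (claim2 _ Hp (list_max bs) k) as [m [Hkm [HKm Hpm]]].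
  assert (Hp' : pos (Wc (m :: cs))).
  { refine (pos_mono _ _ _ Hpm). intros n H. destruct H as [[Ln [Pn HA]] [[_ HAm] _]].
    split; [exact Ln|]. split; [exact Pn|]. intros c [<-|Hcin]; auto. }
  destruct (claim1 _ Hp' k) as [b [Hkb Hwb]].
  exists (b :: bs, m :: cs). unfold Pstep; simpl.
  split; [|split; [intros x Hx; right; exact Hx|split; [intros x Hx; right; exact Hx|]]].
  - split; [|split; [|split]].
    + intros b' [<-|Hin]; [destruct Hwb as [Lb [Pb _]]; auto|auto].
    + intros c [<-|Hin]; [exact (proj1 (proj1 HKm))|auto].
    + intros b' c [<-|Hbin] Hcin.
      * destruct Hwb as [_ [_ HA]]. apply HA, Hcin.
      * destruct Hcin as [<-|Hcin]; [|auto].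
        rewrite Nat.add_comm. apply (proj2 HKm); [|apply (Hb b' Hbin)].
        assert (Hle : (list_max bs <= list_max bs)%nat) by lia.
        apply list_max_le in Hle. rewrite Forall_forall in Hle. apply Hle, Hbin.
    + exact Hp'.
  - split; [exists b; split; [left; reflexivity|exact Hkb]|].
    exists m; split; [left; reflexivity|exact Hkm].
Qed.

Definition stepf (s : list nat * list nat) k :=
  epsilon (inhabits s) (fun s' => Inv s -> Pstep s s' k).

Fixpoint seqs n := match n with O => (nil, nil) | S n => stepf (seqs n) n end.

Lemma seqs_spec n : Inv (seqs n) /\ Pstep (seqs n) (seqs (S n)) n.
Proof.
  induction n as [|n [IH1 IH2]].
  - split; [exact inv0|]. simpl. unfold stepf.
    apply (epsilon_spec (inhabits (@nil nat, @nil nat)) (fun s' => Inv (nil, nil) -> Pstep (nil, nil) s' 0%nat));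
      [|exact inv0].
    destruct (step (nil, nil) 0%nat inv0) as [s' Hs']. exists s'. intros _; exact Hs'.
  - assert (Hi : Inv (seqs (S n))) by apply IH2. split; [exact Hi|].
    change (seqs (S (S n))) with (stepf (seqs (S n)) (S n)). unfold stepf.
    apply (epsilon_spec (inhabits (seqs (S n))) (fun s' => Inv (seqs (S n)) -> Pstep (seqs (S n)) s' (S n)));
      [|exact Hi].
    destruct (step _ (S n) Hi) as [s' Hs']. exists s'. intros _; exact Hs'.
Qed.

Lemma seqs_mono n n' : (n <= n')%nat ->
  incl (fst (seqs n)) (fst (seqs n')) /\ incl (snd (seqs n)) (snd (seqs n')).
Proof.
  induction 1 as [|n' Hle [IH1 IH2]].
  - split; intros x Hx; exact Hx.
  - destruct (seqs_spec n') as [_ [_ [H1 [H2 _]]]].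
    split; intros x Hx; [apply H1, IH1, Hx|apply H2, IH2, Hx].
Qed.

Lemma build : exists B C : nat -> Prop,
    (forall n, B n -> PosN n) /\ (forall n, C n -> PosN n) /\
    infinite_set B /\ infinite_set C /\
    (forall b c, B b -> C c -> A (b + c)%nat).
Proof.
  exists (fun b => exists n, In b (fst (seqs n))), (fun c => exists n, In c (snd (seqs n))).
  split; [|split; [|split; [|split]]].
  - intros b [n Hn]. destruct (seqs_spec n) as [[Hb _] _]. apply (Hb b Hn).
  - intros c [n Hn]. destruct (seqs_spec n) as [[_ [Hc _]] _]. apply (Hc c Hn).
  - intros k. destruct (seqs_spec k) as [_ [_ [_ [_ [[b [Hb Hkb]] _]]]]].
    exists b. split; [exact Hkb|]. exists (S k). exact Hb.
  - intros k. destruct (seqs_spec k) as [_ [_ [_ [_ [_ [c [Hc Hkc]]]]]]].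
    exists c. split; [exact Hkc|]. exists (S k). exact Hc.
  - intros b c [n Hn] [n' Hn'].
    destruct (seqs_spec (Nat.max n n')) as [[_ [_ [Hbc _]]] _].
    apply Hbc.
    + apply (proj1 (seqs_mono n (Nat.max n n') ltac:(lia))), Hn.
    + apply (proj2 (seqs_mono n' (Nat.max n n') ltac:(lia))), Hn'.
Qed.
End Mu.

Theorem proposition2p5 (A : nat -> Prop) (HA : forall n, A n -> PosN n) :
  (exists (Phi : nat -> list nat) (L : nat -> Prop) (eps : R),
     Folner Phi /\ (forall n, L n -> PosN n) /\ eps > 0 /\
     (forall m, PosN m -> exists d,
        density_is Phi (fun n => shiftset A m n /\ L n) d) /\
     (forall F : list nat, (forall l, In l F -> L l) ->
        infinite_set (fun m =>
          PosN m /\ (forall l, In l F -> shiftset A l m) /\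
          exists d, density_is Phi (fun n => shiftset A m n /\ L n) d /\ d > eps))) ->
  exists B C : nat -> Prop,
    (forall n, B n -> PosN n) /\ (forall n, C n -> PosN n) /\
    infinite_set B /\ infinite_set C /\
    (forall b c, B b -> C c -> A (b + c)%nat).
Proof.
  intros [Phi [L [eps [HPhi [HLpos [Heps [_ H5]]]]]]].
  destruct UF.ultra_exists as [U [UI [US [U0 [UC UK]]]]].
  apply (build U UI US U0 UC UK Phi HPhi A L eps); [|exact Heps].
  intros K k.
  set (F := filter (fun l => if excluded_middle_informative (L l) then true else false) (seq 0 (S K))).
  assert (HF : forall l, In l F -> L l).
  { intros l Hl. apply filter_In in Hl. destruct Hl as [_ Hl].
    destruct (excluded_middle_informative (L l)); [assumption|discriminate]. }
  destruct (H5 F HF k) as [m [Hkm [Pm [Hsh [d [Hd Hde]]]]]].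
  exists m. split; [exact Hkm|]. split.
  - split; [exact Pm|]. exists d. split; [exact Hd|exact Hde].
  - intros l Hl Ll. assert (Hin : In l F).
    { apply filter_In. split; [apply in_seq; lia|].
      destruct (excluded_middle_informative (L l)); [reflexivity|contradiction]. }
    destruct (Hsh l Hin) as [_ HAl]. exact HAl.
Qed.
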